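(* Let $A$ be a subalgebra of a $K$-algebra $E$, let $\Delta\subseteq\mathrm{Der}_A(E)$, let $\mathfrak{a}$ be a nonzero $\Delta$-stable ideal of the algebra $N_\Delta(E)$, and let $\mathfrak{a}_0=\mathfrak{a}\cap N_\Delta(E)_0=\mathfrak{a}\cap E^\Delta$. Then: (1) $\mathfrak{a}_0$ is a nonzero ideal of the algebra $N_\Delta(E)_0$, and $\mathfrak{a}'=N_\Delta(E)\mathfrak{a}_0N_\Delta(E)$ is a nonzero ideal of $N_\Delta(E)$ such that $\mathfrak{a}'\subseteq\mathfrak{a}$ and $\mathfrak{a}'\cap N_\Delta(E)_0=\mathfrak{a}_0$. (2) If, in addition, $N_\Delta(E)_0$ is commutative, then $[N_\Delta(E)_1,\mathfrak{a}_0]\subseteq\mathfrak{a}_0$.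
   Context: $\mathrm{Der}_A(E)$ denotes the set of derivations of $E$ that are also (left) $A$-module homomorphisms. For $i\geq 1$, $\Delta^i=\{\delta_1\cdots\delta_i\mid\delta_j\in\Delta\}$; $N_\Delta(E)_i=\{e\in E\mid\Delta^{i+1}e=0\}$ for $i\geq 0$, $N_\Delta(E)=\bigcup_{i\ge0}N_\Delta(E)_i$ (a subalgebra of $E$), and $E^\Delta=\bigcap_{\delta\in\Delta}\ker\delta$. An ideal $\mathfrak{a}$ of $N_\Delta(E)$ is $\Delta$-stable if $\delta(\mathfrak{a})\subseteq\mathfrak{a}$ for all $\delta\in\Delta$. $[x,y]=xy-yx$. *)

(* Defs.v *)
From HB Require Import structures.
From mathcomp Require Import all_boot all_order all_algebra.
Set Implicit Arguments. Unset Strict Implicit. Unset Printing Implicit Defensive.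
Import GRing.Theory.
Local Open Scope ring_scope.

Section Defs.
Variables (K : fieldType) (E : algType K).

Definition is_derivation (d : E -> E) : Prop :=
  [/\ forall x y, d (x + y) = d x + d y,
      forall (k : K) x, d (k *: x) = k *: d x &
      forall x y, d (x * y) = d x * y + x * d y].

Definition in_DerA (A : {pred E}) (d : E -> E) : Prop :=
  is_derivation d /\ forall a x, a \in A -> d (a * x) = a * d x.

(* killed Delta n e  <->  Delta^n e = 0, i.e. d_1 (d_2 (... (d_n e))) = 0
   for all d_1, ..., d_n in Delta (Delta^0 e = e). *)
Fixpoint killed (Delta : (E -> E) -> Prop) (n : nat) (e : E) : Prop :=
  match n with
  | 0 => e = 0
  | n'.+1 => forall d, Delta d -> killed Delta n' (d e)
  end.

Definition Nfilt (Delta : (E -> E) -> Prop) (i : nat) (e : E) : Prop :=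
  killed Delta i.+1 e.

Definition Nalg (Delta : (E -> E) -> Prop) (e : E) : Prop :=
  exists i, Nfilt Delta i e.

Definition Econst (Delta : (E -> E) -> Prop) (e : E) : Prop :=
  forall d, Delta d -> d e = 0.

Definition is_ideal (R I : E -> Prop) : Prop :=
  [/\ forall x, I x -> R x,
      I 0,
      forall x y, I x -> I y -> I (x - y),
      forall (k : K) x, I x -> I (k *: x) &
      forall r x, R r -> I x -> I (r * x) /\ I (x * r)].

Definition nonzero_set (I : E -> Prop) : Prop := exists x, I x /\ x <> 0.

Definition Delta_stable (Delta : (E -> E) -> Prop) (I : E -> Prop) : Prop :=
  forall d x, Delta d -> I x -> I (d x).

Definition prod3 (R I : E -> Prop) (e : E) : Prop :=
  exists s : seq (E * E * E),
    (forall t, t \in s -> [/\ R t.1.1, I t.1.2 & R t.2]) /\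
    e = \sum_(t <- s) t.1.1 * t.1.2 * t.2.

End Defs.

(* Main.v *)
Require Import Defs.
From HB Require Import structures.
From mathcomp Require Import all_boot all_order all_algebra.
From Stdlib Require Import Classical.
Import GRing.Theory.
Set Implicit Arguments. Unset Strict Implicit.
Local Open Scope ring_scope.

Section Helpers.
Variables (K : fieldType) (E : algType K) (Delta : (E -> E) -> Prop).
Hypothesis hD : forall d, Delta d -> is_derivation d.

Lemma der0 (d : E -> E) : is_derivation d -> d 0 = 0.
Proof.
case=> hadd _ _; have := hadd 0 0; rewrite addr0.
by move/(congr1 (fun z => z - d 0)); rewrite addrK subrr.
Qed.

Lemma derN (d : E -> E) x : is_derivation d -> d (- x) = - d x.
Proof.
move=> hd; have h0 := der0 hd; case: hd => hadd _ _.
have := hadd x (- x); rewrite subrr h0 => /eqP; rewrite eq_sym addr_eq0 => /eqP ->; by rewrite opprK.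
Qed.

Lemma derB (d : E -> E) x y : is_derivation d -> d (x - y) = d x - d y.
Proof. move=> hd; rewrite -derN //; by case: hd. Qed.

Lemma killed0 n : killed Delta n 0.
Proof. elim: n => [//|n IH] /= d /hD /der0 ->; exact: IH. Qed.

Lemma killedS n e : killed Delta n e -> killed Delta n.+1 e.
Proof.
elim: n e => [|n IH] e /=.
  by move=> -> d /hD /der0 ->.
by move=> H d Hd; apply: IH; apply: H.
Qed.

Lemma killed_mono m n e : (m <= n)%N -> killed Delta m e -> killed Delta n e.
Proof.
move=> /subnK <-; elim: (n - m)%N => [//|k IH] H.
by rewrite addSn; apply: killedS; apply: IH.
Qed.

Lemma killedB n x y : killed Delta n x -> killed Delta n y -> killed Delta n (x - y).
Proof.
elim: n x y => [|n IH] x y /=; first by move=> -> ->; rewrite subr0.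
move=> Hx Hy d Hd; rewrite derB; last exact: hD.
by apply: IH; [apply: Hx | apply: Hy].
Qed.

Lemma killedD n x y : killed Delta n x -> killed Delta n y -> killed Delta n (x + y).
Proof.
move=> Hx Hy; have -> : x + y = x - (0 - y) by rewrite sub0r opprK.
by apply: killedB => //; apply: killedB => //; apply: killed0.
Qed.

Lemma killedZ n (k : K) x : killed Delta n x -> killed Delta n (k *: x).
Proof.
elim: n x => [|n IH] x /=; first by move=> ->; rewrite scaler0.
move=> Hx d Hd; have [_ hZ _] := hD Hd; rewrite hZ; apply: IH; exact: Hx.
Qed.

Lemma killed_mul N p q x y : (p + q <= N)%N ->
  killed Delta p.+1 x -> killed Delta q.+1 y -> killed Delta (p + q).+1 (x * y).
Proof.
elim: N p q x y => [|N IH] p q x y hpq /= Hx Hy d Hd.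
  move: hpq Hx Hy; case: p => [|p] //; case: q => [|q] // _ Hx Hy.
  have [_ _ hM] := hD Hd; rewrite hM.
  have /= -> := Hx d Hd; have /= -> := Hy d Hd; by rewrite mul0r mulr0 addr0.
have [_ _ hM] := hD Hd; rewrite hM; apply: killedD.
  case: p hpq Hx => [|p] hpq Hx.
    by have /= -> := Hx d Hd; rewrite mul0r; apply: killed0.
  rewrite addSn; apply: IH; [by move: hpq; rewrite addSn | exact: Hx d Hd | exact: Hy].
case: q hpq Hy => [|q] hpq Hy.
  by have /= -> := Hy d Hd; rewrite mulr0; apply: killed0.
rewrite addnS; apply: IH; [by move: hpq; rewrite addnS | exact: Hx | exact: Hy d Hd].
Qed.

Lemma Nalg0 : Nalg Delta 0.
Proof. by exists 0%N; apply: killed0. Qed.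

Lemma Nalg1 : Nalg Delta 1.
Proof.
exists 0%N => d Hd /=; have [hA _ hM] := hD Hd.
have := hM 1 1; rewrite !mul1r !mulr1.
by move/(congr1 (fun z => z - d 1)); rewrite addrK subrr => <-.
Qed.

Lemma NalgB x y : Nalg Delta x -> Nalg Delta y -> Nalg Delta (x - y).
Proof.
move=> [i Hi] [j Hj]; exists (i + j)%N; apply: killedB.
  by apply: killed_mono Hi; rewrite ltnS leq_addr.
by apply: killed_mono Hj; rewrite ltnS leq_addl.
Qed.

Lemma NalgD x y : Nalg Delta x -> Nalg Delta y -> Nalg Delta (x + y).
Proof.
move=> [i Hi] [j Hj]; exists (i + j)%N; apply: killedD.
  by apply: killed_mono Hi; rewrite ltnS leq_addr.
by apply: killed_mono Hj; rewrite ltnS leq_addl.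
Qed.

Lemma NalgN x : Nalg Delta x -> Nalg Delta (- x).
Proof. by move=> Hx; rewrite -sub0r; apply: NalgB => //; apply: Nalg0. Qed.

Lemma NalgZ k x : Nalg Delta x -> Nalg Delta (k *: x).
Proof. by move=> [i Hi]; exists i; apply: killedZ. Qed.

Lemma NalgM x y : Nalg Delta x -> Nalg Delta y -> Nalg Delta (x * y).
Proof.
move=> [i Hi] [j Hj]; exists (i + j)%N; exact: (@killed_mul (i + j)).
Qed.

Lemma prod3_ideal (I : E -> Prop) :
  (forall x, I x -> Nalg Delta x) -> is_ideal (Nalg Delta) (prod3 (Nalg Delta) I).
Proof.
move=> HI; split.
- move=> x [s [Hs ->]]; elim: s Hs => [|t s IHs] Hs; first by rewrite big_nil; apply: Nalg0.
  rewrite big_cons; apply: NalgD; last by apply: IHs => u hu; apply: Hs; rewrite inE hu orbT.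
  have [h1 h2 h3] := Hs t (mem_head _ _).
  by apply: NalgM => //; apply: NalgM => //; apply: HI.
- by exists [::]; rewrite big_nil.
- move=> x y [s [Hs ->]] [s' [Hs' ->]].
  exists (s ++ map (fun t => (- t.1.1, t.1.2, t.2)) s'); split.
    move=> t; rewrite mem_cat => /orP [/Hs //|/mapP [u /Hs' [h1 h2 h3] ->]].
    by split => //; apply: NalgN.
  rewrite big_cat big_map /= -sumrN; congr (_ + _); apply: eq_bigr => t _.
  by rewrite !mulNr.
- move=> k x [s [Hs ->]]; exists (map (fun t => (k *: t.1.1, t.1.2, t.2)) s); split.
    by move=> t /mapP [u /Hs [h1 h2 h3] ->]; split => //; apply: NalgZ.
  rewrite big_map scaler_sumr; apply: eq_bigr => t _; by rewrite !scalerAl.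
- move=> r x Hr [s [Hs ->]]; split.
    exists (map (fun t => (r * t.1.1, t.1.2, t.2)) s); split.
      by move=> t /mapP [u /Hs [h1 h2 h3] ->]; split => //; apply: NalgM.
    rewrite big_map mulr_sumr; apply: eq_bigr => t _; by rewrite !mulrA.
  exists (map (fun t => (t.1.1, t.1.2, t.2 * r)) s); split.
    by move=> t /mapP [u /Hs [h1 h2 h3] ->]; split => //; apply: NalgM.
  rewrite big_map mulr_suml; apply: eq_bigr => t _; by rewrite !mulrA.
Qed.

End Helpers.

Theorem theorem1p6 (K : fieldType) (E : algType K) (A : {pred E})
    (hA : subalg_closed A)
    (Delta : (E -> E) -> Prop) (hDelta : forall d, Delta d -> in_DerA A d)
    (a : E -> Prop)
    (ha_ideal : is_ideal (Nalg Delta) a)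
    (ha_nz : nonzero_set a)
    (ha_stable : Delta_stable Delta a) :
  let a0 := fun x => a x /\ Nfilt Delta 0 x in
  (* N_Delta(E)_0 = E^Delta, so a0 = a ∩ E^Delta *)
  (forall x, a0 x <-> a x /\ Econst Delta x) /\
  (* (1) *)
  (is_ideal (Nfilt Delta 0) a0 /\ nonzero_set a0 /\
   let a' := prod3 (Nalg Delta) a0 in
   is_ideal (Nalg Delta) a' /\ nonzero_set a' /\
   (forall x, a' x -> a x) /\
   (forall x, (a' x /\ Nfilt Delta 0 x) <-> a0 x)) /\
  (* (2) *)
  ((forall x y, Nfilt Delta 0 x -> Nfilt Delta 0 y -> x * y = y * x) ->
   forall x y, Nfilt Delta 1 x -> a0 y -> a0 (x * y - y * x)).
Proof.
have hD : forall d, Delta d -> is_derivation d by move=> d /hDelta [].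
have [aN a0' aB aZ aM] := ha_ideal.
have aD : forall x y, a x -> a y -> a (x + y).
  move=> x y hx hy; have -> : x + y = x - (0 - y) by rewrite sub0r opprK.
  by apply: (aB) => //; apply: (aB).
move=> a0; split; first by move=> x; split.
have N0 : forall x, Nfilt Delta 0 x -> Nalg Delta x by move=> x h; exists 0%N.
have a0N : forall x, a0 x -> Nalg Delta x by move=> x [/aN].
have a0I : is_ideal (Nfilt Delta 0) a0.
  split.
  - by move=> x [].
  - by split => //; apply: killed0.
  - move=> x y [hx Hx] [hy Hy]; split; first exact: aB.
    by apply: killedB.
  - move=> k x [hx Hx]; split; first exact: aZ.
    by apply: killedZ.
  - move=> r x Hr [hx Hx]; have [h1 h2] := aM r x (N0 _ Hr) hx.
    split; split => //; rewrite /Nfilt /= => d Hd; have [_ _ hM] := hD d Hd;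
      by rewrite hM (Hr d Hd) (Hx d Hd) mul0r mulr0 addr0.
have a0nz : nonzero_set a0.
  case: ha_nz => x [hx hx0]; have [i Hi] := aN x hx.
  elim: i x hx hx0 Hi => [|i IH] x hx hx0 Hi; first by exists x.
  case: (classic (forall d, Delta d -> d x = 0)) => Hc.
    by exists x; split => //; split.
  have [d Hnd] := not_all_ex_not _ _ Hc.
  have [Hd Hdx] := imply_to_and _ _ Hnd.
  apply: (IH (d x)); [exact: ha_stable | exact: Hdx | exact: (Hi d Hd)].
have a'a : forall x, prod3 (Nalg Delta) a0 x -> a x.
  move=> x [s [Hs ->]]; elim: s Hs => [|t s IHs] Hs.
    by rewrite big_nil.
  rewrite big_cons; apply: aD; last by apply: IHs => u hu; apply: Hs; rewrite inE hu orbT.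
  have [h1 [h2 _] h3] := Hs t (mem_head _ _).
  have [h4 _] := aM _ _ h1 h2; exact: (aM _ _ h3 h4).2.
have a0a' : forall x, a0 x -> prod3 (Nalg Delta) a0 x.
  move=> x hx; exists [:: (1, x, 1)]; split.
    by move=> t; rewrite inE => /eqP -> /=; split => //; apply: Nalg1.
  by rewrite big_cons big_nil /= mul1r mulr1 addr0.
split; first split => //; first split => //.
  split; first exact: prod3_ideal.
  split; first by case: a0nz => x [hx hx0]; exists x; split => //; apply: a0a'.
  split => // x; split; first by move=> [/a'a h1 h2].
  by move=> hx; split; [apply: a0a' | case: hx].
move=> Hcomm x y Hx [hy Hy]; split.
  by apply: aB; [apply: (aM _ _ _ hy).1 | apply: (aM _ _ _ hy).2]; exists 1%N.
rewrite /Nfilt /= => d Hd; rewrite derB; last exact: hD.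
have [_ _ hM] := hD d Hd; rewrite !hM (Hy d Hd) mulr0 mul0r addr0 add0r.
rewrite Hcomm ?subrr // => d' Hd' /=; exact: (Hx d Hd d' Hd').
Qed.
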